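(* Let $p_1,\dots,p_5$ be the vertices of a regular simplex in $\mathbb{E}^4$ with edge length $\sqrt2$. Then the minimum radius of a circumscribing cylinder of this simplex is $\sqrt{49/80}=\frac{7\sqrt5}{20}\approx0.7826$, and it is attained by a cylinder whose axis is parallel to $p_2+p_3-p_4-p_5$ (and, by symmetry, to any vector obtained by permuting the vertices).
   Context: A cylinder in $\mathbb{E}^n$ is the set of points at fixed distance $\rho>0$ (its radius) from a line (its axis). A cylinder is circumscribing for a simplex if all vertices of the simplex lie on it. *)

(* Defs.v *)
From HB Require Import structures.
From mathcomp Require Import all_boot all_order all_algebra.
Set Implicit Arguments. Unset Strict Implicit. Unset Printing Implicit Defensive.
Import Order.TTheory GRing.Theory Num.Theory.
Local Open Scope ring_scope.

(* Euclidean space E^4 is modelled as row vectors 'rV[R]_4 over a real closed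
   field R (this includes the real numbers). *)

Definition dotv (R : rcfType) (n : nat) (u v : 'rV[R]_n) : R :=
  \sum_(i < n) u 0 i * v 0 i.

Definition enorm (R : rcfType) (n : nat) (u : 'rV[R]_n) : R :=
  Num.sqrt (dotv u u).

Definition dist_to_line_eq (R : rcfType) (n : nat)
  (x a d : 'rV[R]_n) (rho : R) : Prop :=
  (exists t : R, enorm (x - (a + t *: d)) = rho) /\
  (forall s : R, rho <= enorm (x - (a + s *: d))).

Definition circumscribing_cylinder (R : rcfType) (n k : nat)
  (p : 'I_k -> 'rV[R]_n) (a d : 'rV[R]_n) (rho : R) : Prop :=
  d != 0 /\ 0 < rho /\ forall i, dist_to_line_eq (p i) a d rho.

Definition regular_simplex_sqrt2 (R : rcfType) (p : 'I_5 -> 'rV[R]_4) : Prop :=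
  forall i j : 'I_5, i != j -> enorm (p i - p j) = Num.sqrt 2.

Definition parallel (R : rcfType) (n : nat) (d v : 'rV[R]_n) : Prop :=
  exists c : R, c != 0 /\ d = c *: v.

(* Main.v *)
Require Import Defs.
From HB Require Import structures.
From mathcomp Require Import all_boot all_order all_algebra.
From mathcomp Require Import ring lra.
Import Order.TTheory GRing.Theory Num.Theory.
Set Implicit Arguments. Unset Strict Implicit.
Local Open Scope ring_scope.

Lemma newton4 (R : rcfType) (a0 a1 a2 a3 a4 : R) :
  a0 + a1 + a2 + a3 + a4 = 0 -> a0 ^+ 3 + a1 ^+ 3 + a2 ^+ 3 + a3 ^+ 3 + a4 ^+ 3 = 0 ->
  0 < a0 ^+ 2 + a1 ^+ 2 + a2 ^+ 2 + a3 ^+ 2 + a4 ^+ 2 ->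
  (a0 ^+ 2 + a1 ^+ 2 + a2 ^+ 2 + a3 ^+ 2 + a4 ^+ 2) ^+ 2 <=
    4 * (a0 ^+ 4 + a1 ^+ 4 + a2 ^+ 4 + a3 ^+ 4 + a4 ^+ 4).
Proof.
move=> H1 H3 HD.
set D := a0 ^+ 2 + a1 ^+ 2 + a2 ^+ 2 + a3 ^+ 2 + a4 ^+ 2 in HD *.
set p4 := a0 ^+ 4 + a1 ^+ 4 + a2 ^+ 4 + a3 ^+ 4 + a4 ^+ 4.
set e4 := a0 * a1 * a2 * a3 + a0 * a1 * a2 * a4 + a0 * a1 * a3 * a4 + a0 * a2 * a3 * a4 + a1 * a2 * a3 * a4.
set e5 := a0 * a1 * a2 * a3 * a4.
set p1 := a0 + a1 + a2 + a3 + a4 in H1.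
set p3 := a0 ^+ 3 + a1 ^+ 3 + a2 ^+ 3 + a3 ^+ 3 + a4 ^+ 3 in H3.
have N4 : 6 * p4 = 6 * p1 * p3 + 3 * D * D - 3 * p1 * p1 * D + (p1 * p1 * p1 - 3 * p1 * D + 2 * p3) * p1 - 24 * e4.
  rewrite /p4 /p1 /p3 /D /e4; ring.
have P : forall x : R, 6 * ((x - a0) * (x - a1) * (x - a2) * (x - a3) * (x - a4)) =
   6 * x ^+ 5 - 6 * p1 * x ^+ 4 + 3 * p1 * p1 * x ^+ 3 - 3 * D * x ^+ 3
   - (p1 * p1 * p1 - 3 * p1 * D + 2 * p3) * x ^+ 2 + 6 * e4 * x - 6 * e5.
  move=> x; rewrite /p1 /p3 /D /e4 /e5; ring.
rewrite H1 H3 in N4 P. clearbody p4 e4 e5.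
have Q : forall x, (x == a0) || (x == a1) || (x == a2) || (x == a3) || (x == a4) ->
   x ^+ 2 * ((x ^+ 2 - D / 4) ^+ 2 + (e4 - D ^+ 2 / 16)) = x * e5.
  move=> x Hx.
  have E : 6 * ((x - a0) * (x - a1) * (x - a2) * (x - a3) * (x - a4)) = 0.
    by case/orP: Hx => [/orP[/orP[/orP[]|]|]|] /eqP ->; rewrite subrr ?(mul0r,mulr0).
  rewrite P in E.
  have -> : x ^+ 2 * ((x ^+ 2 - D / 4) ^+ 2 + (e4 - D ^+ 2 / 16)) =
     x * (6 * x ^+ 5 - 6 * 0 * x ^+ 4 + 3 * 0 * 0 * x ^+ 3 - 3 * D * x ^+ 3
     - (0 * 0 * 0 - 3 * 0 * D + 2 * 0) * x ^+ 2 + 6 * e4 * x - 6 * e5) / 6 + x * e5.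
    by field.
  by rewrite E mulr0 mul0r add0r.
have S : \sum_(x <- [:: a0; a1; a2; a3; a4]) x ^+ 2 * ((x ^+ 2 - D / 4) ^+ 2 + (e4 - D ^+ 2 / 16)) = 0.
  rewrite (eq_big_seq (fun x => x * e5)); last first.
    by move=> x; rewrite !inE => Hx; apply: Q; rewrite !orbA in Hx.
  rewrite -big_distrl /= !big_cons big_nil addr0.
  by rewrite !addrA -/p1 H1 mul0r.
rewrite !big_cons big_nil addr0 in S.
have HE : (e4 - D ^+ 2 / 16) * D <= 0.
  have -> : (e4 - D ^+ 2 / 16) * D = - (a0 ^+ 2 * (a0 ^+ 2 - D / 4) ^+ 2 + a1 ^+ 2 * (a1 ^+ 2 - D / 4) ^+ 2 + a2 ^+ 2 * (a2 ^+ 2 - D / 4) ^+ 2 + a3 ^+ 2 * (a3 ^+ 2 - D / 4) ^+ 2 + a4 ^+ 2 * (a4 ^+ 2 - D / 4) ^+ 2).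
    apply/eqP; rewrite -subr_eq0; apply/eqP; rewrite -S. 
    by rewrite /D; field.
  rewrite oppr_le0; repeat apply: addr_ge0; apply: mulr_ge0; exact: sqr_ge0.
idtac.
nra.
Qed.


Lemma core (R : rcfType) (a0 a1 a2 a3 a4 g0 g1 g2 g3 g4 r2 D C b : R) :
  D = a0 ^+ 2 + a1 ^+ 2 + a2 ^+ 2 + a3 ^+ 2 + a4 ^+ 2 -> 0 < D ->
  C = g0 ^+ 2 + g1 ^+ 2 + g2 ^+ 2 + g3 ^+ 2 + g4 ^+ 2 ->
  b = a0 * g0 + a1 * g1 + a2 * g2 + a3 * g3 + a4 * g4 ->
  a0 + a1 + a2 + a3 + a4 = 0 -> g0 + g1 + g2 + g3 + g4 = 0 ->
  r2 * D = (4/5 - 2 * g0 + C) * D - (a0 - b) ^+ 2 ->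
  r2 * D = (4/5 - 2 * g1 + C) * D - (a1 - b) ^+ 2 ->
  r2 * D = (4/5 - 2 * g2 + C) * D - (a2 - b) ^+ 2 ->
  r2 * D = (4/5 - 2 * g3 + C) * D - (a3 - b) ^+ 2 ->
  r2 * D = (4/5 - 2 * g4 + C) * D - (a4 - b) ^+ 2 ->
  49/80 <= r2.
Proof.
move=> HD Dpos HC Hb H1 Hg E0 E1 E2 E3 E4.
have H3 : a0 ^+ 3 + a1 ^+ 3 + a2 ^+ 3 + a3 ^+ 3 + a4 ^+ 3 = 0.
  have -> : a0 ^+ 3 + a1 ^+ 3 + a2 ^+ 3 + a3 ^+ 3 + a4 ^+ 3 =
  - (a0 * ((4/5 - 2 * g0 + C) * D - (a0 - b) ^+ 2 - r2 * D)
  + a1 * ((4/5 - 2 * g1 + C) * D - (a1 - b) ^+ 2 - r2 * D)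
  + a2 * ((4/5 - 2 * g2 + C) * D - (a2 - b) ^+ 2 - r2 * D)
  + a3 * ((4/5 - 2 * g3 + C) * D - (a3 - b) ^+ 2 - r2 * D)
  + a4 * ((4/5 - 2 * g4 + C) * D - (a4 - b) ^+ 2 - r2 * D))
  + (4/5 * D + C * D - r2 * D - b ^+ 2) * (a0 + a1 + a2 + a3 + a4)
  - 2 * D * (a0 * g0 + a1 * g1 + a2 * g2 + a3 * g3 + a4 * g4 - b)
  + 2 * b * (a0 ^+ 2 + a1 ^+ 2 + a2 ^+ 2 + a3 ^+ 2 + a4 ^+ 2 - D).
    by field.
  rewrite -E0 -E1 -E2 -E3 -E4 !subrr !mulr0 !addr0 H1 -Hb -HD !subrr !mulr0. by rewrite !(oppr0, addr0, add0r, subr0).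
have P4 := @newton4 R _ _ _ _ _ H1 H3 (ltac:(by rewrite -HD)).
rewrite -HD in P4.
set p4 := a0 ^+ 4 + a1 ^+ 4 + a2 ^+ 4 + a3 ^+ 4 + a4 ^+ 4 in P4.
set K := 4/5 + C - r2.
have G0 : 2 * D * g0 = K * D - (a0 - b) ^+ 2 by rewrite /K; lra.
have G1 : 2 * D * g1 = K * D - (a1 - b) ^+ 2 by rewrite /K; lra.
have G2 : 2 * D * g2 = K * D - (a2 - b) ^+ 2 by rewrite /K; lra.
have G3 : 2 * D * g3 = K * D - (a3 - b) ^+ 2 by rewrite /K; lra.
have G4 : 2 * D * g4 = K * D - (a4 - b) ^+ 2 by rewrite /K; lra.
have X2 : (a0 - b) ^+ 2 + (a1 - b) ^+ 2 + (a2 - b) ^+ 2 + (a3 - b) ^+ 2 + (a4 - b) ^+ 2 = D + 5 * b ^+ 2.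
  have -> : (a0 - b) ^+ 2 + (a1 - b) ^+ 2 + (a2 - b) ^+ 2 + (a3 - b) ^+ 2 + (a4 - b) ^+ 2 =
    (a0 ^+ 2 + a1 ^+ 2 + a2 ^+ 2 + a3 ^+ 2 + a4 ^+ 2) - 2 * b * (a0 + a1 + a2 + a3 + a4) + 5 * b ^+ 2 by ring.
  by rewrite H1 -HD mulr0 subr0.
have X4 : (a0 - b) ^+ 4 + (a1 - b) ^+ 4 + (a2 - b) ^+ 4 + (a3 - b) ^+ 4 + (a4 - b) ^+ 4 = p4 + 6 * b ^+ 2 * D + 5 * b ^+ 4.
  have -> : (a0 - b) ^+ 4 + (a1 - b) ^+ 4 + (a2 - b) ^+ 4 + (a3 - b) ^+ 4 + (a4 - b) ^+ 4 =
    p4 - 4 * b * (a0 ^+ 3 + a1 ^+ 3 + a2 ^+ 3 + a3 ^+ 3 + a4 ^+ 3) + 6 * b ^+ 2 * (a0 ^+ 2 + a1 ^+ 2 + a2 ^+ 2 + a3 ^+ 2 + a4 ^+ 2) - 4 * b ^+ 3 * (a0 + a1 + a2 + a3 + a4) + 5 * b ^+ 4 by rewrite /p4; ring.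
  by rewrite H1 H3 -HD !mulr0 !subr0.
have F1 : 5 * (K * D) = D + 5 * b ^+ 2.
  rewrite -X2.
  have -> : 5 * (K * D) = (K * D - (a0 - b) ^+ 2) + (K * D - (a1 - b) ^+ 2) + (K * D - (a2 - b) ^+ 2) + (K * D - (a3 - b) ^+ 2) + (K * D - (a4 - b) ^+ 2) + ((a0 - b) ^+ 2 + (a1 - b) ^+ 2 + (a2 - b) ^+ 2 + (a3 - b) ^+ 2 + (a4 - b) ^+ 2) by ring.
  rewrite -G0 -G1 -G2 -G3 -G4.
  have -> : 2 * D * g0 + 2 * D * g1 + 2 * D * g2 + 2 * D * g3 + 2 * D * g4 = 2 * D * (g0 + g1 + g2 + g3 + g4) by ring.
  by rewrite Hg mulr0 add0r.
have F2 : 4 * D ^+ 2 * C = p4 + 6 * b ^+ 2 * D + 5 * b ^+ 4 - 5 * (K * D) ^+ 2.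
  rewrite -X4 HC.
  have -> : 4 * D ^+ 2 * (g0 ^+ 2 + g1 ^+ 2 + g2 ^+ 2 + g3 ^+ 2 + g4 ^+ 2) =
    (2 * D * g0) ^+ 2 + (2 * D * g1) ^+ 2 + (2 * D * g2) ^+ 2 + (2 * D * g3) ^+ 2 + (2 * D * g4) ^+ 2 by ring.
  rewrite G0 G1 G2 G3 G4.
  have -> : (a0 - b) ^+ 4 + (a1 - b) ^+ 4 + (a2 - b) ^+ 4 + (a3 - b) ^+ 4 + (a4 - b) ^+ 4 - 5 * (K * D) ^+ 2 =
    (a0 - b) ^+ 4 + (a1 - b) ^+ 4 + (a2 - b) ^+ 4 + (a3 - b) ^+ 4 + (a4 - b) ^+ 4 + 5 * (K * D) ^+ 2
    - 2 * (K * D) * (5 * (K * D)) by ring.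
  by rewrite F1 -X2; ring.
have KD : K * D = (D + 5 * b ^+ 2) / 5 by rewrite -F1; field.
have Fin : 80 * r2 * D ^+ 2 = 44 * D ^+ 2 + 20 * p4.
  have -> : 80 * r2 * D ^+ 2 = 64 * D ^+ 2 + 20 * (4 * D ^+ 2 * C) - 80 * (K * D) * D by rewrite /K; field.
  by rewrite F2 KD; field.
have D2 : 0 < D ^+ 2 by rewrite exprn_gt0.
have : 49 * D ^+ 2 <= 80 * r2 * D ^+ 2 by rewrite Fin; lra.
rewrite ler_pM2r // => H. lra.
Qed.


Section Dot.
Variable R : rcfType.
Variable n : nat.
Implicit Types u v w : 'rV[R]_n.

Lemma dotvC u v : dotv u v = dotv v u.
Proof. by apply: eq_bigr => i _; rewrite mulrC. Qed.

Lemma dotvDl u v w : dotv (u + v) w = dotv u w + dotv v w.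
Proof. by rewrite /dotv -big_split; apply: eq_bigr => i _; rewrite mxE mulrDl. Qed.

Lemma dotvZl k u w : dotv (k *: u) w = k * dotv u w.
Proof. by rewrite /dotv mulr_sumr; apply: eq_bigr => i _; rewrite mxE mulrA. Qed.

Lemma dotvNl u w : dotv (- u) w = - dotv u w.
Proof. by rewrite -scaleN1r dotvZl mulN1r. Qed.

Lemma dotvBl u v w : dotv (u - v) w = dotv u w - dotv v w.
Proof. by rewrite dotvDl dotvNl. Qed.

Lemma dotv0l w : dotv 0 w = 0.
Proof. by rewrite /dotv big1 // => i _; rewrite mxE mul0r. Qed.

Lemma dotvDr u v w : dotv w (u + v) = dotv w u + dotv w v.
Proof. by rewrite dotvC dotvDl !(dotvC w). Qed.
Lemma dotvZr k u w : dotv w (k *: u) = k * dotv w u.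
Proof. by rewrite dotvC dotvZl dotvC. Qed.
Lemma dotvNr u w : dotv w (- u) = - dotv w u.
Proof. by rewrite dotvC dotvNl dotvC. Qed.
Lemma dotvBr u v w : dotv w (u - v) = dotv w u - dotv w v.
Proof. by rewrite dotvC dotvBl !(dotvC w). Qed.
Lemma dotv0r w : dotv w 0 = 0.
Proof. by rewrite dotvC dotv0l. Qed.

Lemma dotv_suml (I : finType) (F : I -> 'rV[R]_n) w :
  dotv (\sum_i F i) w = \sum_i dotv (F i) w.
Proof.
apply: (big_morph (fun u => dotv u w)); [by move=> x y; rewrite dotvDl | exact: dotv0l].
Qed.
Lemma dotv_sumr (I : finType) (F : I -> 'rV[R]_n) w :
  dotv w (\sum_i F i) = \sum_i dotv w (F i).
Proof. by rewrite dotvC dotv_suml; apply: eq_bigr => i _; rewrite dotvC. Qed.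

Lemma dotv_ge0 u : 0 <= dotv u u.
Proof. by apply: sumr_ge0 => i _; rewrite -expr2 sqr_ge0. Qed.

Lemma enorm_sq u : enorm u ^+ 2 = dotv u u.
Proof. by rewrite /enorm sqr_sqrtr // dotv_ge0. Qed.

End Dot.


Section Frame.
Variable R : rcfType.
Variable u : 'I_5 -> 'rV[R]_4.
Hypothesis Hsum : \sum_i u i = 0.
Hypothesis Hgram : forall i j, dotv (u i) (u j) = (i == j)%:R - 1/5.

Lemma frame_zero w : (forall j, dotv w (u j) = 0) -> w = 0.
Proof.
move=> Hw.
pose U : 'M[R]_4 := \matrix_(j, k) u (widen_ord (leqnSn 4) j) 0 k.
have Gentry : forall j k, (U *m U^T) j k = dotv (u (widen_ord (leqnSn 4) j)) (u (widen_ord (leqnSn 4) k)).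
  by move=> j k; rewrite !mxE; apply: eq_bigr => l _; rewrite !mxE.
have Hlast : \sum_(m < 4) u (widen_ord (leqnSn 4) m) = - u ord_max.
  by apply/eqP; rewrite -subr_eq0 opprK; move: Hsum; rewrite big_ord_recr /= => ->.
have UV : U *m (U^T *m (1%:M + const_mx 1)) = 1%:M.
  rewrite mulmxA mulmxDr mulmx1; apply/matrixP => j k.
  rewrite mxE Gentry [in RHS]mxE.
  have -> : ((U *m U^T) *m const_mx (1 : R)) j k = 1/5.
    rewrite mxE.
    transitivity (dotv (u (widen_ord (leqnSn 4) j)) (\sum_(m < 4) u (widen_ord (leqnSn 4) m))).
      by rewrite dotv_sumr; apply: eq_bigr => m _; rewrite Gentry mxE mulr1.
    rewrite Hlast dotvNr Hgram.
    have -> : (widen_ord (leqnSn 4) j == ord_max) = false.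
      by apply/negbTE; rewrite -val_eqE /= neq_ltn ltn_ord.
    by rewrite sub0r opprK.
  rewrite Hgram.
  have -> : (widen_ord (leqnSn 4) j == widen_ord (leqnSn 4) k) = (j == k) by rewrite -val_eqE.
  lra.
have Uu : U \in unitmx by case: (mulmx1_unit UV).
have Z : w *m U^T = 0.
  apply/rowP => j; rewrite [RHS]mxE -(Hw (widen_ord (leqnSn 4) j)) !mxE.
  by apply: eq_bigr => l _; rewrite !mxE.
by rewrite -(mulmxK (ltac:(by rewrite unitmx_tr) : U^T \in unitmx) w) Z mul0mx.
Qed.

Lemma sum_delta (f : 'I_5 -> R) j : \sum_i f i * (i == j)%:R = f j.
Proof.
rewrite (bigD1 j) //= eqxx mulr1 big1 ?addr0 // => i /negbTE ->; by rewrite mulr0.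
Qed.

Lemma frame_exp x : x = \sum_i dotv x (u i) *: u i.
Proof.
apply/eqP; rewrite -subr_eq0; apply/eqP; apply: frame_zero => j.
rewrite dotvBl dotv_suml.
under eq_bigr => i _ do rewrite dotvZl Hgram mulrBr.
rewrite big_split /= sumrN sum_delta -mulr_suml.
under eq_bigr => i _ do rewrite dotvC.
by rewrite -dotv_suml Hsum dotv0l mul0r oppr0 addr0 dotvC subrr.
Qed.

Lemma frame_dot x y : dotv x y = \sum_i dotv x (u i) * dotv y (u i).
Proof.
rewrite {1}(frame_exp x) dotv_suml; apply: eq_bigr => i _; by rewrite dotvZl (dotvC (u i) y).
Qed.

End Frame.


Section M.
Variable R : rcfType.

Lemma dotv_eq0 (n : nat) (u : 'rV[R]_n) : dotv u u = 0 -> u = 0.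
Proof.
move=> H; apply/rowP => i; rewrite mxE.
have P : forall k : 'I_n, true -> 0 <= u 0 k * u 0 k by move=> k _; rewrite -expr2 sqr_ge0.
have := psumr_eq0P P H (i:=i) isT.
by move/eqP; rewrite mulf_eq0 orbb => /eqP.
Qed.

Lemma normsq_sub (n : nat) (w d : 'rV[R]_n) t :
  dotv (w - t *: d) (w - t *: d) = dotv w w - 2 * t * dotv w d + t ^+ 2 * dotv d d.
Proof.
rewrite !dotvBl !dotvBr !dotvZl !dotvZr (dotvC d w); ring.
Qed.

Lemma dist_eq (n : nat) (x a d : 'rV[R]_n) rho : d != 0 -> dist_to_line_eq x a d rho ->
  rho ^+ 2 * dotv d d = dotv (x - a) (x - a) * dotv d d - dotv (x - a) d ^+ 2.
Proof.
move=> dn0 [[t Ht] Hs].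
have Dpos : 0 < dotv d d.
  rewrite lt_def dotv_ge0 andbT; apply/eqP => /dotv_eq0 H; by rewrite H eqxx in dn0.
have E : forall s, x - (a + s *: d) = (x - a) - s *: d by move=> s; rewrite opprD addrA.
set w := x - a in E *.
have rho0 : 0 <= rho by rewrite -Ht sqrtr_ge0.
have H1 : rho ^+ 2 = dotv w w - 2 * t * dotv w d + t ^+ 2 * dotv d d.
  by rewrite -Ht E enorm_sq normsq_sub.
set s := dotv w d / dotv d d.
have H2 : rho ^+ 2 <= dotv w w - 2 * s * dotv w d + s ^+ 2 * dotv d d.
  rewrite -normsq_sub -enorm_sq -E lerXn2r // ?nnegrE ?sqrtr_ge0 //.
have Ds : s * dotv d d = dotv w d by rewrite /s mulfVK // gt_eqF.
apply/le_anti/andP; split.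
  have : rho ^+ 2 * dotv d d <= (dotv w w - 2 * s * dotv w d + s ^+ 2 * dotv d d) * dotv d d.
    by rewrite ler_pM2r.
  move=> H; apply: (le_trans H); clearbody s.
  have -> : (dotv w w - 2 * s * dotv w d + s ^+ 2 * dotv d d) * dotv d d = dotv w w * dotv d d - dotv w d ^+ 2.
    by rewrite -Ds; ring.
  by [].
rewrite H1.
have -> : (dotv w w - 2 * t * dotv w d + t ^+ 2 * dotv d d) * dotv d d =
  dotv w w * dotv d d - dotv w d ^+ 2 + (t * dotv d d - dotv w d) ^+ 2 by ring.
by rewrite lerDl sqr_ge0.
Qed.

Lemma sum_ind (i : 'I_5) : \sum_(k < 5) ((i == k)%:R : R) = 1.
Proof.
rewrite (bigD1 i) //= eqxx big1 ?addr0 // => k; rewrite eq_sym => /negbTE ->; done.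
Qed.

Lemma sum_affine (f : 'I_5 -> R) a b : \sum_k (a * f k + b) = a * (\sum_k f k) + 5 * b.
Proof. rewrite big_split /= -mulr_sumr big_const_ord /=; ring. Qed.

Lemma gram (p : 'I_5 -> 'rV[R]_4) : regular_simplex_sqrt2 p ->
  forall i j, dotv (p i - (1/5) *: \sum_k p k) (p j - (1/5) *: \sum_k p k) = (i == j)%:R - 1/5.
Proof.
move=> Hreg.
set g := (1/5) *: \sum_k p k.
pose N i := dotv (p i) (p i).
have HP : forall i k, dotv (p i) (p k) = (N i + N k)/2 - 1 + (i == k)%:R.
  move=> i k; case: (eqVneq i k) => [-> | ne].
    by rewrite /N /=; field.
  have := Hreg i k ne; move/(congr1 (fun x => x ^+ 2)).
  rewrite enorm_sq sqr_sqrtr // dotvBl !dotvBr (dotvC (p k) (p i)) => H.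
  rewrite /N /=; lra.
set S := \sum_k N k.
have SP : forall i, \sum_k dotv (p i) (p k) = 5/2 * N i + S/2 - 4.
  move=> i.
  have -> : \sum_k dotv (p i) (p k) = \sum_k (1/2 * N k + (N i / 2 - 1)) + \sum_k (i == k)%:R.
    rewrite -big_split /=; apply: eq_bigr => k _; rewrite HP; ring.
  rewrite sum_affine sum_ind -/S; lra.
have Pg : forall i, dotv (p i) g = (5/2 * N i + S/2 - 4)/5.
  by move=> i; rewrite /g dotvZr dotv_sumr SP; lra.
have gg : dotv g g = (5 * S - 20)/25.
  rewrite {1}/g dotvZl dotv_suml.
  under eq_bigr => k _ do rewrite Pg.
  have -> : \sum_k (5/2 * N k + S/2 - 4)/5 = \sum_k (1/2 * N k + (S/2 - 4)/5).
    by apply: eq_bigr => k _; field.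
  rewrite sum_affine -/S; lra.
move=> i j.
rewrite !dotvBl !dotvBr (dotvC g (p j)) HP !Pg gg; lra.
Qed.

End M.


Definition o0 : 'I_5 := @Ordinal 5 0 isT.
Definition o1 : 'I_5 := @Ordinal 5 1 isT.
Definition o2 : 'I_5 := @Ordinal 5 2 isT.
Definition o3 : 'I_5 := @Ordinal 5 3 isT.
Definition o4 : 'I_5 := @Ordinal 5 4 isT.

Lemma sum5 (R : rcfType) (f : 'I_5 -> R) : \sum_i f i = f o0 + f o1 + f o2 + f o3 + f o4.
Proof.
rewrite !big_ord_recl big_ord0 addr0 !addrA.
by congr (_ + _ + _ + _ + _); congr f; apply: val_inj.
Qed.

Lemma lower (R : rcfType) (p : 'I_5 -> 'rV[R]_4) :
  regular_simplex_sqrt2 p ->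
  forall (a d : 'rV[R]_4) (rho : R),
      circumscribing_cylinder p a d rho -> Num.sqrt (49 / 80) <= rho.
Proof.
move=> Hreg a d rho [dn0 [rpos Hd]].
have Hgram := gram Hreg.
set g := (1/5) *: \sum_k p k in Hgram.
set u := fun i => p i - g.
have Hgram' : forall i j, dotv (u i) (u j) = (i == j)%:R - 1/5 by exact: Hgram.
have Hsum : \sum_i u i = 0.
  rewrite /u sumrB sumr_const card_ord -scaler_nat /g scalerA.
  by rewrite (_ : 5%:R * (1/5) = 1 :> R) ?scale1r ?subrr //; field.
set c := a - g.
have Hdist : forall i, rho ^+ 2 * dotv d d = dotv (u i - c) (u i - c) * dotv d d - dotv (u i - c) d ^+ 2.
  move=> i; have -> : u i - c = p i - a by rewrite /u /c opprB addrA subrK.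
  exact: dist_eq dn0 (Hd i).
clearbody u c.
set al := fun i => dotv (u i) d.
set ga := fun i => dotv (u i) c.
have HD : dotv d d = \sum_i al i ^+ 2.
  by rewrite (frame_dot Hsum Hgram' d d); apply: eq_bigr => i _; rewrite /al dotvC expr2.
have HC : dotv c c = \sum_i ga i ^+ 2.
  by rewrite (frame_dot Hsum Hgram' c c); apply: eq_bigr => i _; rewrite /ga dotvC expr2.
have Hb : dotv c d = \sum_i al i * ga i.
  by rewrite (frame_dot Hsum Hgram' c d); apply: eq_bigr => i _; rewrite /al /ga !(dotvC _ (u i)) mulrC.
have H1 : \sum_i al i = 0.
  by rewrite /al -dotv_suml Hsum dotv0l.
have Hg : \sum_i ga i = 0.
  by rewrite /ga -dotv_suml Hsum dotv0l.
have Ei : forall i, rho ^+ 2 * dotv d d = (4/5 - 2 * ga i + dotv c c) * dotv d d - (al i - dotv c d) ^+ 2.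
  move=> i; rewrite (Hdist i); congr (_ * _ - _ ^+ 2).
    rewrite dotvBl !dotvBr Hgram' eqxx (dotvC c (u i)) /ga /=; lra.
  by rewrite dotvBl.
have Dpos : 0 < dotv d d.
  rewrite lt_def dotv_ge0 andbT; apply/eqP => /dotv_eq0 H; by rewrite H eqxx in dn0.
rewrite sum5 in HD; rewrite sum5 in HC; rewrite sum5 in Hb; rewrite sum5 in H1; rewrite sum5 in Hg.

have := core HD Dpos HC Hb H1 Hg (Ei o0) (Ei o1) (Ei o2) (Ei o3) (Ei o4).
move=> H.
rewrite -(ger0_norm (ltW rpos)) -sqrtr_sqr ler_wsqrtr //.
Qed.


Lemma dist_ok (R : rcfType) (x a d : 'rV[R]_4) s :
  dotv (x - a) (x - a) = 49/80 + s ^+ 2 / 4 -> dotv (x - a) d = s -> dotv d d = 4 ->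
  dist_to_line_eq x a d (Num.sqrt (49/80)).
Proof.
move=> Hw Hwd Hdd.
have E : forall t, x - (a + t *: d) = (x - a) - t *: d by move=> t; rewrite opprD addrA.
split.
  exists (s / 4); rewrite /enorm E normsq_sub Hw Hwd Hdd; congr Num.sqrt; by field.
move=> t; rewrite /enorm E normsq_sub Hw Hwd Hdd ler_wsqrtr //.
have : 0 <= (2 * t - s / 2) ^+ 2 by exact: sqr_ge0.
lra.
Qed.

Lemma exists_other (i j k l : 'I_5) : exists m, m \notin [:: i; j; k; l].
Proof.
case: (pickP (fun m => m \notin [:: i; j; k; l])) => [m Hm | H]; first by exists m.
have : (#|'I_5| <= #|[:: i; j; k; l]|)%N.
  apply: subset_leq_card; apply/subsetP => x _; move: (H x) => /= /negbFE; done.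
rewrite card_ord => H5.
have := card_size [:: i; j; k; l].
move=> H4; have := leq_trans H5 H4; done.
Qed.

Lemma all_in (s : seq 'I_5) x : uniq s -> size s = 5 -> x \in s.
Proof.
move=> Us Ss; apply/negPn/negP => Hx.
have U' : uniq (x :: s) by rewrite /= Hx Us.
have := max_card (mem (x :: s)).
by rewrite (card_uniqP U') /= Ss card_ord.
Qed.

Lemma upper (R : rcfType) (p : 'I_5 -> 'rV[R]_4) : regular_simplex_sqrt2 p ->
  forall i j k l : 'I_5, uniq [:: i; j; k; l] ->
      exists (a d : 'rV[R]_4),
        circumscribing_cylinder p a d (Num.sqrt (49 / 80)) /\
        parallel d (p i + p j - p k - p l).
Proof.
move=> Hreg i j k l Hu.
have [m Hm] := exists_other i j k l.
have U5 : uniq [:: m; i; j; k; l] by rewrite /= Hm.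
move: (U5); rewrite /= !inE !negb_or.
case/and5P => /and4P[mi mj mk ml] /and3P[ij ik il] /andP[jk jl] kl _.
have im : i != m by rewrite eq_sym.
have jm : j != m by rewrite eq_sym.
have km : k != m by rewrite eq_sym.
have lm : l != m by rewrite eq_sym.
have ji : j != i by rewrite eq_sym.
have ki : k != i by rewrite eq_sym.
have li : l != i by rewrite eq_sym.
have kj : k != j by rewrite eq_sym.
have lj : l != j by rewrite eq_sym.
have lk : l != k by rewrite eq_sym.
have Hgram := gram Hreg.
set g := (1/5) *: \sum_k p k in Hgram.
pose u := fun i => p i - g.
have Hgram' : forall i j, dotv (u i) (u j) = (i == j)%:R - 1/5 by exact: Hgram.
have Hd : p i + p j - p k - p l = u i + u j - u k - u l by apply/rowP => z; rewrite /u !mxE; ring.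
have Hw : forall x, p x - (g + (1/8) *: u m) = u x - (1/8) *: u m by move=> x; apply/rowP => z; rewrite /u !mxE; ring.
clearbody u.
set d := u i + u j - u k - u l.
have ud : forall x, dotv (u x) d = (x == i)%:R + (x == j)%:R - (x == k)%:R - (x == l)%:R.
  by move=> x; rewrite /d !(dotvDr, dotvBr, dotvNr) !Hgram'; lra.
have dd : dotv d d = 4.
  rewrite {1}/d !(dotvDl, dotvBl, dotvNl) !ud !eqxx.
  rewrite (negbTE ij) (negbTE ik) (negbTE il) (negbTE ji) (negbTE jk) (negbTE jl).
  rewrite (negbTE ki) (negbTE kj) (negbTE kl) (negbTE li) (negbTE lj) (negbTE lk) /=; lra.
exists (g + (1/8) *: u m), d; split; last by exists 1; rewrite oner_neq0 scale1r Hd.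
split.
  apply/eqP => H; move: dd; rewrite H dotv0l => /eqP; by rewrite eq_sym pnatr_eq0.
split; first by rewrite sqrtr_gt0; lra.
move=> x; apply: (dist_ok (s := dotv (u x) d)); rewrite ?Hw //; last first.
  rewrite dotvBl dotvZl (ud m) (negbTE mi) (negbTE mj) (negbTE mk) (negbTE ml) /=; lra.
rewrite (ud x) !(dotvBl, dotvBr, dotvZl, dotvZr) !Hgram'.
have := all_in x U5 erefl; rewrite !inE.
case/orP => [/eqP->|]; last case/orP => [/eqP->|]; last case/orP => [/eqP->|];
  last case/orP => [/eqP->|/eqP->];
rewrite ?eqxx ?(negbTE ij) ?(negbTE ik) ?(negbTE il) ?(negbTE ji) ?(negbTE jk) ?(negbTE jl)
  ?(negbTE ki) ?(negbTE kj) ?(negbTE kl) ?(negbTE li) ?(negbTE lj) ?(negbTE lk)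
  ?(negbTE mi) ?(negbTE mj) ?(negbTE mk) ?(negbTE ml)
  ?(negbTE im) ?(negbTE jm) ?(negbTE km) ?(negbTE lm) /=; lra.
Qed.


Theorem mainTheorem11 (R : rcfType) (p : 'I_5 -> 'rV[R]_4) :
  regular_simplex_sqrt2 p ->
  (* lower bound: every circumscribing cylinder has radius >= sqrt(49/80) *)
  (forall (a d : 'rV[R]_4) (rho : R),
      circumscribing_cylinder p a d rho -> Num.sqrt (49 / 80) <= rho) /\
  (* attained, with axis parallel to p_i + p_j - p_k - p_l for any distinct
     i, j, k, l (in particular p2 + p3 - p4 - p5) *)
  (forall i j k l : 'I_5,
      uniq [:: i; j; k; l] ->
      exists (a d : 'rV[R]_4),
        circumscribing_cylinder p a d (Num.sqrt (49 / 80)) /\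
        parallel d (p i + p j - p k - p l)).
Proof.
move=> Hreg; split; [exact: lower | exact: upper].
Qed.
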